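(* Assume (H1), (H2.1)–(H2.4), (H3.1), (H3.2) and (H3.3). Then $\|\widehat{T}_{N}-T|_{\widehat{X}}\|_{\widehat{X}\leftarrow\widehat{X}}\to 0$ as $N\to\infty$.
   Context: Let $d\ge 1$ be an integer and $\tau>0$, $h\ge\tau$ real. $X$, $X^{+}$, $X^{\pm}$ are real normed spaces of functions $[-\tau,0]\to\mathbb{R}^{d}$, $[0,h]\to\mathbb{R}^{d}$, $[-\tau,h]\to\mathbb{R}^{d}$, respectively. For a function $u$ on $[-\tau,h]$, $u_{h}(\theta):=u(h+\theta)$, $\theta\in[-\tau,0]$. $V\colon X\times X^{+}\to X^{\pm}$ and $\mathcal{F}_{s}\colon X^{\pm}\to X^{+}$ are linear with $V(\phi,z)|_{[-\tau,0]}=\phi$; $V^{-}\phi:=V(\phi,0_{X^{+}})$, $V^{+}z:=V(0_{X},z)$. The operator $T\colon X\to X$ is $T\phi:=V(\phi,z^{\ast})_{h}$, where $z^{\ast}\in X^{+}$ is the unique solution of $z=\mathcal{F}_{s}V(\phi,z)$. Let $\widetilde{X}^{+}\subseteq X^{+}$ be a linear subspace; for $N\in\mathbb{N}$, $X_{N}^{+}$ is finite-dimensional, $R_{N}^{+}\colon\widetilde{X}^{+}\to X_{N}^{+}$, $P_{N}^{+}\colon X_{N}^{+}\to X^{+}$ are linear with $R_{N}^{+}P_{N}^{+}=I_{X_{N}^{+}}$, $\mathcal{L}_{N}^{+}:=P_{N}^{+}R_{N}^{+}$, and $\Pi_{N}^{+}$ is the range of $P_{N}^{+}$. Hypotheses: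 (H1) $I_{X^{+}}-\mathcal{F}_{s}V^{+}$ is invertible on $X^{+}$ with bounded inverse and for each $\phi\in X$ the equation $z=\mathcal{F}_{s}V(\phi,z)$ has a unique solution in $X^{+}$. There is a linear subspace $\widehat{X}^{+}\subseteq\widetilde{X}^{+}$ with a norm $\|\cdot\|_{\widehat{X}^{+}}$ making it complete such that: (H2.1) $\|(\mathcal{L}_{N}^{+}-I_{X^{+}})|_{\widehat{X}^{+}}\|_{X^{+}\leftarrow\widehat{X}^{+}}\to 0$ as $N\to\infty$; (H2.2) $\Pi_{N}^{+}\subseteq\widehat{X}^{+}$ for all $N$; (H2.3) there is $\hat{c}_{1}>0$ with $\|\cdot\|_{X^{+}}\le\hat{c}_{1}\|\cdot\|_{\widehat{X}^{+}}$ on $\widehat{X}^{+}$; (H2.4) the range of $\mathcal{F}_{s}V^{+}$ is contained in $\widehat{X}^{+}$ and $\mathcal{F}_{s}V^{+}\colon X^{+}\to\widehat{X}^{+}$ is bounded. There is a linear subspace $\widehat{X}\subseteq X$ with a norm $\|\cdot\|_{\widehat{X}}$ making it complete such that: (H3.1) $\mathcal{F}_{s}V^{-}$ maps $\widehat{X}$ into $\widehat{X}^{+}$ and $\mathcal{F}_{s}V^{-}|_{\widehat{X}}\colon\widehat{X}\to\widehat{X}^{+}$ is bounded; (H3.2) $V(\phi,z)_{h}\in\widehat{X}$ for all $(\phi,z)\in\widehat{X}\times\widehat{X}^{+}$; (H3.3) there is $\hat{c}_{2}>0$ with $\|(V^{+}z)_{h}\|_{\widehat{X}}\le\hat{c}_{2}\|z\|_{X^{+}}$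 for all $z\in\widehat{X}^{+}$. For $N$ large enough that $I_{X^{+}}-\mathcal{L}_{N}^{+}\mathcal{F}_{s}V^{+}$ is invertible on $X^{+}$, the operator $\widehat{T}_{N}\colon\widehat{X}\to\widehat{X}$ is $\widehat{T}_{N}\phi:=V(\phi,w^{\ast})_{h}$, where $w^{\ast}\in X^{+}$ is the unique solution of $z=\mathcal{L}_{N}^{+}\mathcal{F}_{s}V(\phi,z)$. *)

(* Defs.v *)
From HB Require Import structures.
From mathcomp Require Import all_boot all_order all_algebra.
From mathcomp Require Import all_classical all_reals all_analysis.
Set Implicit Arguments. Unset Strict Implicit. Unset Printing Implicit Defensive.
Import Order.TTheory GRing.Theory Num.Theory.
Import numFieldNormedType.Exports.
Local Open Scope classical_set_scope.
Local Open Scope ring_scope.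

Section Defs.
Variable R : realType.

Definition bounded_op (U V : normedModType R) (f : U -> V) :=
  exists C : R, forall x, `|f x| <= C * `|x|.

Definition bounded_invertible (U : normedModType R) (A : U -> U) :=
  exists B : U -> U, [/\ cancel A B, cancel B A & bounded_op B].

Definition opnorm (U V : normedModType R) (f : U -> V) : \bar R :=
  ereal_sup [set (`|f x|)%:E | x in [set x : U | `|x| <= 1]].

(* Operator norm ||D||_{V <- U} of an operator D : U -> W whose values lie in
   the subspace V of W, V being embedded in W by the injective map i
   (the V-norm of D u is the norm of its unique i-preimage). *)
Definition opnorm_via (U V W : normedModType R) (i : V -> W) (D : U -> W)
  : \bar R :=
  ereal_sup [set (`|v|)%:E | v in
              [set v : V | exists2 u : U, `|u| <= 1 & i v = D u]].

(* f realizes U as a normed space of functions [a,b] -> R^d: each element x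
   is the function t |-> f x t (t in [a,b]); the vector operations are the
   pointwise ones and an element is determined by its values on [a,b]. *)
Definition function_space (d : nat) (a b : R) (U : normedModType R)
  (f : U -> R -> 'rV[R]_d) :=
  (forall (c : R) (x y : U) (t : R), a <= t <= b ->
      f (c *: x + y) t = c *: f x t + f y t) /\
  (forall x y : U, (forall t, a <= t <= b -> f x t = f y t) -> x = y).

(* psi = u_h on [-tau, 0], i.e. psi(theta) = u(h + theta). *)
Definition shift_rep (d : nat) (tau h : R) (psi u : R -> 'rV[R]_d) :=
  forall theta : R, - tau <= theta <= 0 -> psi theta = u (h + theta).

End Defs.

(* Main.v *)
Require Import Defs.
From mathcomp Require Import ring lra.
From HB Require Import structures.
From mathcomp Require Import all_boot all_order all_algebra.
From mathcomp Require Import all_classical all_reals all_analysis.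
Import Order.TTheory GRing.Theory Num.Theory.
Import numFieldNormedType.Exports.
Local Open Scope classical_set_scope.
Local Open Scope ring_scope.
Lemma ecvg0 (R : realType) (x : nat -> \bar R) :
  (forall e : R, 0 < e -> \forall N \near \oo, (0%:E <= x N <= e%:E)%E) ->
  x @ \oo --> 0%:E.
Proof.
move=> H; apply/fine_cvgP; split.
  have := H 1 ltr01; apply: filterS => N /andP[h1 h2].
  by rewrite fin_numElt (lt_le_trans (ltNyr 0) h1) (le_lt_trans h2 (ltry _)).
apply/cvgrPdist_lt => e e0; have := H (e / 2) (divr_gt0 e0 (ltr0Sn _ 1)); apply: filterS => N /=.
move=> /andP[]; case: (x N) => [r||] /=; rewrite ?lee_fin => h1 h2; rewrite ?subrr ?normr0 //.
rewrite sub0r normrN ger0_norm //; lra.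
Qed.

Lemma opnorm_eps (R : realType) (X1 X2 : normedModType R) (f : nat -> X1 -> X2) :
  (forall N a x, f N (a *: x) = a *: f N x) ->
  (fun N => opnorm (f N)) @ \oo --> 0%:E ->
  forall e : R, 0 < e -> \forall N \near \oo, forall w, `|f N w| <= e * `|w|.
Proof.
move=> fZ /fine_cvgP[fin cv] e e0.
move/cvgrPdist_lt: cv => /(_ e e0) cv.
apply: filterS2 fin cv => N fN hN.
have B1 w : `|w| <= 1 -> `|f N w| <= e.
  move=> w1.
  have : ((`|f N w|)%:E <= opnorm (f N))%E.
    by apply: ereal_sup_ubound; exists w.
  rewrite -(fineK fN) lee_fin => /le_trans; apply.
  move: hN; rewrite sub0r normrN /= => /ltW; apply: le_trans; exact: ler_norm.
move=> w; have [->|w0] := eqVneq w 0.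
  have -> : f N 0 = 0 by rewrite -(scale0r (0 : X1)) fZ scale0r.
  by rewrite !normr0 mulr0.
have nw : 0 < `|w| by rewrite normr_gt0.
have -> : f N w = `|w| *: f N (`|w|^-1 *: w).
  by rewrite -fZ scalerA mulfV ?scale1r // gt_eqF.
rewrite normrZ normr_id mulrC ler_pM2r //; apply: B1.
by rewrite normrZ normrV ?unitfE ?gt_eqF // normr_id mulVf // gt_eqF.
Qed.

Lemma mk_binv (R : realType) (U : normedModType R) (A : U -> U) (C : R) :
  (forall x y, A (x - y) = A x - A y) ->
  (forall z, `|z| <= C * `|A z|) ->
  (forall y, exists z, A z = y) ->
  bounded_invertible A.
Proof.
move=> AB Ab Asurj.
have [B HB] := choice Asurj.
have A0 z : A z = 0 -> z = 0.
  by move=> Az; apply/normr0_eq0/eqP; rewrite eq_le normr_ge0 andbT;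
     apply: (le_trans (Ab z)); rewrite Az normr0 mulr0.
exists B; split => //.
- move=> z; apply/eqP; rewrite -subr_eq0; apply/eqP/A0.
  by rewrite AB HB subrr.
- by exists C => y; rewrite -{2}(HB y); exact: Ab.
Qed.

Lemma fixpt (R : realType) (Y : completeNormedModType R) (K : Y -> Y) (q : R) :
  0 <= q -> q < 1 -> (forall x y, `|K x - K y| <= q * `|x - y|) ->
  exists p, p = K p.
Proof.
move=> q0 q1 HK.
pose f : {fun [set: Y] >-> [set: Y]} := [fun of totalfun_ setT K].
have : is_contraction f.
  exists (NngNum q0); split => //=.
  move=> [x y] _ /=; exact: HK.
move=> /banach_fixed_point [].
- exact: closedT.
- by exists 0.
move=> p _ hp; by exists p.
Qed.

Lemma linfacts (R : realType) (U W : lmodType R) (f : U -> W) :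
  (forall a x y, f (a *: x + y) = a *: f x + f y) ->
  [/\ f 0 = 0, (forall x y, f (x - y) = f x - f y), (forall x y, f (x + y) = f x + f y)
   & (forall a x, f (a *: x) = a *: f x)].
Proof.
move=> H.
have f0 : f 0 = 0.
  have := H 1 0 0; rewrite !scale1r addr0 => /(congr1 (fun t => t - f 0)).
  by rewrite subrr addrK => ->.
have fD x y : f (x + y) = f x + f y by move: (H 1 x y); rewrite !scale1r.
have fZ a x : f (a *: x) = a *: f x by move: (H a x 0); rewrite !addr0 f0 addr0.
split => // x y; by rewrite -scaleN1r fD fZ scaleN1r.
Qed.

Lemma sub4 (U : zmodType) (a b c d : U) : a - b - (c - d) = a - c - (b - d).
Proof. by rewrite !opprB !addrA -!(addrAC _ d) -!(addrAC _ (- c)) -!(addrAC _ (-b)). Qed.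

Theorem proposition4p7 (R : realType) (d : nat) (tau h : R)
  (X Xp Xpm : normedModType R)
  (fX : X -> R -> 'rV[R]_d) (fXp : Xp -> R -> 'rV[R]_d)
  (fXpm : Xpm -> R -> 'rV[R]_d)
  (V : {linear (X * Xp)%type -> Xpm}) (Fs : {linear Xpm -> Xp})
  (T : X -> X)
  (Xt : set Xp) (XN : nat -> vectType R)
  (RN : forall N : nat, Xp -> XN N) (PN : forall N : nat, {linear XN N -> Xp})
  (Xph : completeNormedModType R) (iXp : {linear Xph -> Xp})
  (Xh : completeNormedModType R) (iX : {linear Xh -> X})
  (c1 c2 : R) (G : Xp -> Xph) (Gm : Xh -> Xph)
  (That : nat -> Xh -> Xh) :
  (* setting *)
  (0 < d)%N -> 0 < tau -> tau <= h ->
  function_space (- tau) 0 fX ->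
  function_space 0 h fXp ->
  function_space (- tau) h fXpm ->
  (forall (phi : X) (z : Xp) (t : R), - tau <= t <= 0 ->
      fXpm (V (phi, z)) t = fX phi t) ->
  (* the subspace X~+ and the restriction/prolongation operators *)
  Xt 0 ->
  (forall (a : R) (x y : Xp), Xt x -> Xt y -> Xt (a *: x + y)) ->
  (forall (N : nat) (a : R) (x y : Xp), Xt x -> Xt y ->
      RN N (a *: x + y) = a *: RN N x + RN N y) ->
  (forall (N : nat) (x : XN N), Xt (PN N x)) ->
  (forall (N : nat) (x : XN N), RN N (PN N x) = x) ->
  (* T phi := V(phi, zstar)_h, zstar the solution of z = Fs V(phi, z) *)
  (forall (phi : X) (z : Xp), z = Fs (V (phi, z)) ->
      shift_rep tau h (fX (T phi)) (fXpm (V (phi, z)))) ->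
  (* (H1) *)
  bounded_invertible (fun z : Xp => z - Fs (V (0, z))) ->
  (forall phi : X, exists! z : Xp, z = Fs (V (phi, z))) ->
  (* X^+ hat: a complete normed space linearly embedded in X~+ *)
  injective iXp ->
  (forall w : Xph, Xt (iXp w)) ->
  (* (H2.1) *)
  (fun N : nat => opnorm (fun w : Xph => PN N (RN N (iXp w)) - iXp w))
     @ \oo --> 0%:E ->
  (* (H2.2) *)
  (forall (N : nat) (x : XN N), exists w : Xph, iXp w = PN N x) ->
  (* (H2.3) *)
  0 < c1 -> (forall w : Xph, `|iXp w| <= c1 * `|w|) ->
  (* (H2.4) : G is Fs V^+ viewed as a map X^+ -> X^+ hat *)
  (forall z : Xp, iXp (G z) = Fs (V (0, z))) -> bounded_op G ->
  (* X hat: a complete normed space linearly embedded in X *)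
  injective iX ->
  (* (H3.1) : Gm is Fs V^- restricted to X hat, viewed as a map into X^+ hat *)
  (forall phi : Xh, iXp (Gm phi) = Fs (V (iX phi, 0))) -> bounded_op Gm ->
  (* (H3.2) *)
  (forall (phi : Xh) (z : Xph), exists psi : Xh,
      shift_rep tau h (fX (iX psi)) (fXpm (V (iX phi, iXp z)))) ->
  (* (H3.3) *)
  0 < c2 ->
  (forall (z : Xph) (psi : Xh),
      shift_rep tau h (fX (iX psi)) (fXpm (V (0, iXp z))) ->
      `|psi| <= c2 * `|iXp z|) ->
  (* T^_N phi := V(phi, wstar)_h, wstar the solution of z = L_N Fs V(phi, z),
     for every N such that I - L_N Fs V^+ is invertible *)
  (forall N : nat,
      bounded_invertible (fun z : Xp => z - PN N (RN N (Fs (V (0, z))))) ->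
      forall (phi : Xh) (w : Xp), w = PN N (RN N (Fs (V (iX phi, w)))) ->
      shift_rep tau h (fX (iX (That N phi))) (fXpm (V (iX phi, w)))) ->
  (* conclusion: || T^_N - T|_{X hat} ||_{X hat <- X hat} -> 0 *)
  (fun N : nat => opnorm_via iX (fun phi : Xh => iX (That N phi) - T (iX phi)))
     @ \oo --> 0%:E.
Proof.
move=> hd htau htauh fsX fsXp fsXpm hVr Xt0 Xtlin RNlin XtPN RNPN hT H1inv H1uniq
  iXp_inj iXpXt H21 H22 c1pos H23 HG Gbd iX_inj HGm Gmbd H32 c2pos H33 HThat.
have Vsplit phi z : V (phi, z) = V (phi, 0) + V (0, z).
  rewrite -linearD.
  have -> : ((phi, 0) + (0, z) : X * Xp) = (phi + 0, 0 + z) by [].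
  by rewrite addr0 add0r.
have VZ (p : X) (y : Xp) a : V (a *: p, a *: y) = a *: V (p, y).
  by rewrite -linearZ.
have V0lin a x y : V (0, a *: x + y) = a *: V (0, x) + V (0, y).
  rewrite -VZ scaler0 -linearD.
  have -> : ((0, a *: x) + (0, y) : X * Xp) = (0 + 0, a *: x + y) by [].
  by rewrite addr0.
have Vm0lin a x y : V (a *: x + y, 0) = a *: V (x, 0) + V (y, 0).
  rewrite -VZ scaler0 -linearD.
  have -> : ((a *: x, 0) + (y, 0) : X * Xp) = (a *: x + y, 0 + 0) by [].
  by rewrite addr0.
have Glin a x y : G (a *: x + y) = a *: G x + G y.
  by apply: iXp_inj; rewrite linearP !HG V0lin linearP.
have Gmlin a x y : Gm (a *: x + y) = a *: Gm x + Gm y.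
  by apply: iXp_inj; rewrite linearP !HGm linearP Vm0lin linearP.
have [G0 GB GD GZ] := @linfacts _ _ _ _ Glin.
have [Gm0 GmB GmD GmZ] := @linfacts _ _ _ _ Gmlin.
pose LN N x := PN N (RN N x).
have LNlin N a x y : Xt x -> Xt y -> LN N (a *: x + y) = a *: LN N x + LN N y.
  by move=> xt yt; rewrite /LN RNlin // linearP.
have LN0 N : LN N 0 = 0.
  have := LNlin N 1 0 0 Xt0 Xt0; rewrite !scale1r addr0 => /(congr1 (fun t => t - LN N 0)).
  by rewrite subrr addrK => <-.
have LND N x y : Xt x -> Xt y -> LN N (x + y) = LN N x + LN N y.
  by move=> xt yt; move: (LNlin N 1 x y xt yt); rewrite !scale1r.
have LNZ N a x : Xt x -> LN N (a *: x) = a *: LN N x.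
  by move=> xt; move: (LNlin N a x 0 xt Xt0); rewrite !addr0 LN0 addr0.
have LNB N x y : Xt x -> Xt y -> LN N (x - y) = LN N x - LN N y.
  by move=> xt yt; rewrite -scaleN1r addrC LNlin // scaleN1r addrC.
pose S N w := LN N (iXp w) - iXp w.
have SB N x y : S N (x - y) = S N x - S N y.
  by rewrite /S linearB LNB // sub4.
have SZ N a x : S N (a *: x) = a *: S N x.
  by rewrite /S linearZ LNZ // scalerBr.
have [Bi [hAB hBA [b0 Hb0]]] := H1inv.
have Hb y : `|Bi y| <= `|b0| * `|y|.
  by apply: (le_trans (Hb0 y)); rewrite ler_wpM2r // ler_norm.
have [g0 Hg0] := Gbd.
have Hg y : `|G y| <= `|g0| * `|y|.
  by apply: (le_trans (Hg0 y)); rewrite ler_wpM2r // ler_norm.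
have [m0 Hm0] := Gmbd.
have Hm y : `|Gm y| <= `|m0| * `|y|.
  by apply: (le_trans (Hm0 y)); rewrite ler_wpM2r // ler_norm.
set b := `|b0|. set g := `|g0|. set m := `|m0|.
have b_ge0 : 0 <= b by apply: normr_ge0.
have g_ge0 : 0 <= g by apply: normr_ge0.
have m_ge0 : 0 <= m by apply: normr_ge0.
pose A z := z - Fs (V (0, z)).
have AE z : A z = z - iXp (G z) by rewrite /A HG.
have AB x y : A (x - y) = A x - A y by rewrite !AE GB linearB sub4.
have ABi y : A (Bi y) = y by exact: hBA.
have BiB x y : Bi (x - y) = Bi x - Bi y.
  by apply: (@can_inj _ _ A Bi hAB); rewrite AB !ABi.
have fXB x y t : - tau <= t <= 0 -> fX (x - y) t = fX x t - fX y t.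
  by move=> ht; rewrite -scaleN1r addrC fsX.1 // scaleN1r addrC.
have fXpmB x y t : - tau <= t <= h -> fXpm (x - y) t = fXpm x t - fXpm y t.
  by move=> ht; rewrite -scaleN1r addrC fsXpm.1 // scaleN1r addrC.
have [_ V0B _ _] := @linfacts _ _ _ (fun z => V (0, z)) V0lin.
pose Kc := c2 * (2 * (b * m * (1 + g * b * c1))).
have Kc_ge0 : 0 <= Kc.
  by rewrite /Kc mulr_ge0 ?(ltW c2pos) // mulr_ge0 // mulr_ge0 ?mulr_ge0 //
     addr_ge0 // mulr_ge0 ?mulr_ge0 // ltW.
have claim N e : 0 < e -> b * g * e <= 1 / 2 -> (forall w, `|S N w| <= e * `|w|) ->
  (0%:E <= opnorm_via iX (fun phi : Xh => (iX (That N phi) - T (iX phi))%R)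
        <= (Kc * e)%:E)%E.
  move=> e0 he HS.
  pose AN z := z - PN N (RN N (Fs (V (0, z)))).
  have ANE z : AN z = A z - S N (G z).
    by rewrite /AN AE /S /LN HG opprB addrA subrK.
  have ANB x y : AN (x - y) = AN x - AN y by rewrite !ANE AB GB SB sub4.
  have apriori z : `|z| <= 2 * b * `|AN z|.
    have zE : z = Bi (AN z + S N (G z)) by rewrite ANE subrK; exact/esym/hAB.
    have h1 : `|z| <= b * `|AN z| + (b * g * e) * `|z|.
      rewrite {1}zE; apply: (le_trans (Hb _)).
      rewrite -mulrA -mulrA -mulrDr ler_wpM2l //.
      apply: (le_trans (ler_normD _ _)); rewrite lerD2l.
      apply: (le_trans (HS _)); rewrite mulrCA ler_wpM2l ?(ltW e0) //.
    have h2 : (b * g * e) * `|z| <= 1 / 2 * `|z| by rewrite ler_wpM2r.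
    have := normr_ge0 (AN z); lra.
  have surj y : exists z, AN z = y.
    pose K w := G (Bi (y + S N w)).
    have [p hp] : exists p, p = K p.
      apply: (@fixpt _ _ K (1 / 2)); [lra | lra |] => x1 x2.
      rewrite /K -GB -BiB opprD addrACA subrr add0r -SB.
      have hB : `|Bi (S N (x1 - x2))| <= b * (e * `|x1 - x2|).
        apply: (le_trans (Hb _)); rewrite ler_wpM2l //; exact: HS.
      apply: (le_trans (Hg _)); rewrite -/g.
      have := normr_ge0 (x1 - x2); have := normr_ge0 (Bi (S N (x1 - x2))).
      nra.
    exists (Bi (y + S N p)); rewrite ANE ABi.
    by rewrite -/(K p) -hp addrK.
  have binvN : bounded_invertible AN.
    by apply: (@mk_binv _ _ AN (2 * b)).
  have est u : exists v : Xh, iX v = iX (That N u) - T (iX u) /\ `|v| <= Kc * e * `|u|.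
    have [zs [hzs _]] := H1uniq (iX u).
    have hz : iXp (Gm u + G zs) = zs.
      by rewrite linearD HGm HG -linearD -Vsplit -hzs.
    have [psi hpsi] := H32 u (Gm u + G zs).
    rewrite hz in hpsi.
    have Tpsi : iX psi = T (iX u).
      apply: fsX.2 => t ht.
      by rewrite (hpsi t ht) (hT _ _ hzs t ht).
    have [w hw] := surj (LN N (iXp (Gm u))).
    have wfix : w = PN N (RN N (Fs (V (iX u, w)))).
      rewrite Vsplit linearD -HGm -HG -/(LN N _) LND // -hw /AN HG /LN.
      by rewrite subrK.
    have [om hom] := H22 N (RN N (Fs (V (iX u, w)))).
    rewrite -wfix in hom.
    have hThat := HThat N binvN u w wfix.
    exists (That N u - psi); split; first by rewrite linearB Tpsi.
    have sv : shift_rep tau h (fX (iX (That N u - psi)))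
                (fXpm (V (0, iXp (om - (Gm u + G zs))))).
      move=> t ht.
      have ht' : - tau <= h + t <= h.
        case/andP: ht => ht1 ht2; apply/andP; split; lra.
      rewrite linearB (fXB _ _ _ ht) (hThat t ht) (hpsi t ht) -(fXpmB _ _ _ ht').
      by rewrite linearB hom hz V0B (Vsplit _ w) (Vsplit _ zs) opprD addrACA subrr add0r.
    apply: (le_trans (H33 _ _ sv)).
    rewrite linearB hom hz.
    have wE : w = LN N (iXp (Gm u + G w)).
      by rewrite linearD HGm HG -linearD -Vsplit /LN; exact: wfix.
    have zsE : zs - iXp (G zs) = iXp (Gm u).
      by rewrite -{1}hz linearD addrK.
    have eq1 : A (w - zs) = S N (Gm u + G w).
      rewrite AB !AE zsE /S {1}wE linearD.
      by rewrite opprD addrA addrAC.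
    have hD : `|w - zs| <= b * (e * (m * `|u| + g * `|w|)).
      rewrite -(hAB (w - zs)) -/(A (w - zs)) eq1.
      apply: (le_trans (Hb _)); rewrite ler_wpM2l //.
      apply: (le_trans (HS _)); rewrite ler_wpM2l ?(ltW e0) //.
      apply: (le_trans (ler_normD _ _)); apply: lerD; [exact: Hm | exact: Hg].
    have hZ : `|zs| <= b * (c1 * (m * `|u|)).
      rewrite -(hAB zs) -/(A zs) AE zsE.
      apply: (le_trans (Hb _)); rewrite ler_wpM2l //.
      apply: (le_trans (H23 _)); rewrite ler_wpM2l ?(ltW c1pos) //.
    have hW : `|w| <= `|w - zs| + `|zs|.
      by rewrite -{1}(subrK zs w) ler_normD.
    have bge0 : 0 <= b * g * e by rewrite mulr_ge0 ?mulr_ge0 // ltW.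
    have p1 : (b * g * e) * `|w| <= (b * g * e) * (`|w - zs| + `|zs|).
      by rewrite ler_wpM2l.
    have p2 : (b * g * e) * `|w - zs| <= 1 / 2 * `|w - zs|.
      by rewrite ler_wpM2r.
    have p3 : (b * g * e) * `|zs| <= (b * g * e) * (b * (c1 * (m * `|u|)))
      by rewrite ler_wpM2l.
    have hD2 : `|w - zs| <= 2 * (b * e * m * `|u|) + 2 * ((b * g * e) * (b * (c1 * (m * `|u|)))).
      have e1 : b * (e * (m * `|u| + g * `|w|)) = b * e * m * `|u| + (b * g * e) * `|w|.
        by ring.
      rewrite e1 in hD; lra.
    rewrite /Kc; have := ltW c2pos => c2ge0.
    have -> : c2 * (2 * (b * m * (1 + g * b * c1))) * e * `|u| =
      c2 * (2 * (b * e * m * `|u|) + 2 * ((b * g * e) * (b * (c1 * (m * `|u|))))).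
      by ring.
    by rewrite ler_wpM2l.
  have [v0 [hv0 _]] := est 0.
  apply/andP; split.
    apply: (@le_trans _ _ (`|v0|)%:E); first by rewrite lee_fin.
    apply: ereal_sup_ubound; exists v0 => //; exists 0; last exact: hv0.
    by rewrite normr0 ler01.
  apply: ge_ereal_sup => _ [v [u hu hv] <-].
  have [v' [hv' hb']] := est u.
  have -> : v = v' by apply: iX_inj; rewrite hv hv'.
  rewrite lee_fin; apply: (le_trans hb').
  by rewrite -[X in _ <= X]mulr1 ler_wpM2l // mulr_ge0 // ltW.
apply: ecvg0 => eps eps0.
have k1 : 0 < Kc + 1 by lra.
have bg0 : 0 <= b * g by rewrite mulr_ge0.
have k2 : 0 < 2 * (b * g + 1) by lra.
pose e := Num.min (eps / (Kc + 1)) (1 / (2 * (b * g + 1))).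
have e0 : 0 < e by rewrite /e lt_min !divr_gt0.
have e1 : e <= eps / (Kc + 1) by rewrite /e ge_min lexx.
have e2 : e <= 1 / (2 * (b * g + 1)) by rewrite /e ge_min lexx orbT.
have he : b * g * e <= 1 / 2.
  have : e * (2 * (b * g + 1)) <= 1 by rewrite -ler_pdivlMr.
  have := ltW e0; nra.
have hKe : Kc * e <= eps.
  have : e * (Kc + 1) <= eps by rewrite -ler_pdivlMr.
  have := ltW e0; nra.
have := @opnorm_eps _ _ _ S SZ H21 e e0.
apply: filterS => N HN.
have /andP[h1 h2] := claim N e e0 he HN.
apply/andP; split => //; apply: (le_trans h2); by rewrite lee_fin.
Qed.
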